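(* Let $T$ be a balanced tree. Then $T$ is unmixed if and only if (1) $\mathrm{height}(T)\le 3$, (2) for all $v\in V_2$, $|N(v)\cap V_1|=1$, and (3) for all $v\in V_1$, $|N(v)\cap V_2|\le 1$.
   Context: $N(v)=\{u: uv\in E\}$, $N(D)=\bigcup_{v\in D}N(v)$. A leaf is a vertex of degree 1; the height of a vertex is its minimal distance to a leaf (an isolated vertex has height 0); $V_k$ is the set of vertices of height $k$; $\mathrm{height}(T)=\max\{k:V_k\neq\emptyset\}$. A tree is balanced if no two adjacent vertices have the same height. A TD-set is $D\subseteq V$ with $N(D)=V$, minimal if no proper subset is a TD-set; $T$ is unmixed if all minimal TD-sets have the same size. *)

(* Defs.v *)
From mathcomp Require Import all_boot.
Set Implicit Arguments. Unset Strict Implicit. Unset Printing Implicit Defensive.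

Section Graph.
Variables (T : finType) (e : rel T).

Definition simple_graph : Prop := symmetric e /\ irreflexive e.

Definition connected_graph : Prop := forall x y : T, connect e x y.

Definition has_cycle : Prop :=
  exists s : seq T, [/\ uniq s, 3 <= size s & cycle e s].

Definition is_tree : Prop :=
  [/\ simple_graph, 0 < #|T|, connected_graph & ~ has_cycle].

Definition nbhd (v : T) : {set T} := [set u | e u v].
Definition nbhdS (D : {set T}) : {set T} := \bigcup_(v in D) nbhd v.

Definition leaf (v : T) : bool := #|nbhd v| == 1.

(* there is a leaf at distance exactly (walk length) k from v;
   the minimal such k is the distance from v to the nearest leaf *)
Definition leaf_within (v : T) (k : nat) : bool :=
  [exists l, leaf l && [exists s : k.-tuple T, path e v s && (last v s == l)]].

(* height of a vertex: minimal distance to a leaf (isolated vertex: 0).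
   In a connected graph all distances are < #|T|, so searching k in
   [0, #|T|) finds the minimum. *)
Definition height (v : T) : nat :=
  if #|nbhd v| == 0 then 0 else find (leaf_within v) (iota 0 #|T|).

Definition Vh (k : nat) : {set T} := [set v | height v == k].

Definition balanced : Prop := forall u v, e u v -> height u != height v.

Definition TDset (D : {set T}) : Prop := nbhdS D = [set: T].
Definition minimal_TDset (D : {set T}) : Prop :=
  TDset D /\ forall D' : {set T}, D' \proper D -> ~ TDset D'.
Definition unmixed : Prop :=
  forall D1 D2, minimal_TDset D1 -> minimal_TDset D2 -> #|D1| = #|D2|.

(* height(T) = max{k : V_k nonempty} *)
Definition tree_height_le (m : nat) : Prop := forall v, height v <= m.

End Graph.

(* Main.v *)
Require Import Defs.
From mathcomp Require Import all_boot.
From mathcomp Require Import zify.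
Set Implicit Arguments. Unset Strict Implicit. Unset Printing Implicit Defensive.

Section Basics.
Variables (T : finType) (e : rel T).
Hypothesis esym : symmetric e.
Hypothesis eirr : irreflexive e.

Local Notation N := (nbhd e).
Local Notation ht := (height e).

Lemma inN u v : (u \in N v) = e u v.
Proof. by rewrite inE. Qed.

Lemma adj_neq u v : e u v -> u != v.
Proof. by apply: contraTneq => ->; rewrite eirr. Qed.

Lemma leaf_withinP v k :
  reflect (exists p : seq T, [/\ size p = k, path e v p & leaf e (last v p)])
          (leaf_within e v k).
Proof.
apply: (iffP existsP) => [[l /andP[Hl /existsP[s /andP[Hp /eqP Hlast]]]]|[p [Hs Hp Hl]]].
  by exists (tval s); rewrite size_tuple Hlast.
have Hs' : size p == k by rewrite Hs.
exists (last v p); rewrite Hl /=; apply/existsP; exists (Tuple Hs').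
by rewrite /= Hp eqxx.
Qed.

Lemma height_le v : ht v <= #|T|.
Proof.
rewrite /height; case: ifP => // _.
by apply: leq_trans (find_size _ _) _; rewrite size_iota.
Qed.

Lemma height_found v : #|N v| != 0 -> ht v < #|T| -> leaf_within e v (ht v).
Proof.
move=> Hn; rewrite /height (negbTE Hn) => Hlt.
have Hh : has (leaf_within e v) (iota 0 #|T|) by rewrite has_find size_iota.
by have := nth_find 0 Hh; rewrite nth_iota.
Qed.

Lemma height_min v k : #|N v| != 0 -> leaf_within e v k -> ht v <= k.
Proof.
move=> Hn Hk; case: (ltnP k #|T|) => Hkn; last by apply: leq_trans (height_le v) Hkn.
rewrite /height (negbTE Hn) leqNgt; apply/negP => Hlt.
by have := before_find 0 Hlt; rewrite nth_iota // Hk.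
Qed.

Lemma nbhd_nonempty u v : e u v -> #|N v| != 0.
Proof. by move=> H; apply/negP => /eqP/card0_eq/(_ u); rewrite inN H. Qed.

Lemma leaf_height0 v : leaf e v -> ht v = 0.
Proof.
move=> Hl; apply/eqP; rewrite -leqn0; apply: height_min.
  by move: Hl; rewrite /leaf => /eqP ->.
by apply/leaf_withinP; exists [::].
Qed.

Lemma height0_leaf v : #|N v| != 0 -> ht v = 0 -> leaf e v.
Proof.
move=> Hn H0.
have Ht : ht v < #|T| by rewrite H0; apply/card_gt0P; exists v.
have := height_found Hn Ht; rewrite H0 => /leaf_withinP[p [Hs _ Hl]].
by move: Hs Hl; case: p.
Qed.

Lemma height_adj u v : e u v -> ht u <= (ht v).+1.
Proof.
move=> Huv.
have Hnu : #|N u| != 0 by apply: (nbhd_nonempty (v:=u) (u:=v)); rewrite esym.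
have Hnv : #|N v| != 0 by apply: nbhd_nonempty Huv.
case: (ltnP (ht v) #|T|) => Hlt.
  have := height_found Hnv Hlt => /leaf_withinP[p [Hs Hp Hl]].
  apply: height_min => //; apply/leaf_withinP; exists (v :: p).
  by rewrite /= Hs Huv Hp.
by apply: leq_trans (height_le u) _; apply: leq_trans Hlt _.
Qed.

Lemma walk_short v p : #|N v| != 0 -> path e v p -> leaf e (last v p) -> ht v < #|T|.
Proof.
move=> Hn Hp Hl; case: (shortenP Hp) Hl => p' Hp' Hu _ Hl.
have Hsz : size (v :: p') <= #|T| by rewrite -(card_uniqP Hu) max_card.
apply: leq_ltn_trans (height_min (k := size p') Hn _) _ => //.
by apply/leaf_withinP; exists p'.
Qed.

Hypothesis bal : balanced e.

Lemma found v : #|N v| != 0 -> ht v < #|T|.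
Proof.
move=> Hn; rewrite ltnNge; apply/negP => Hge.
have [u Hu] : exists u, u \in N v by apply/card_gt0P; rewrite lt0n.
rewrite inN in Hu.
have Hne := bal Hu.
have Hnu : #|N u| != 0 by apply: (nbhd_nonempty (u:=v)); rewrite esym.
have Hltu : ht u < #|T|.
  have := height_le u; have := height_le v; move: Hge Hne; lia.
have := height_found Hnu Hltu => /leaf_withinP[p [_ Hp Hl]].
have := walk_short (p := u :: p) Hn; rewrite /= esym Hu Hp => /(_ isT Hl).
by rewrite ltnNge Hge.
Qed.

Lemma height_down v k : ht v = k.+1 -> exists u, e v u /\ ht u = k.
Proof.
move=> Hv.
have Hn : #|N v| != 0 by apply/negP => /eqP H0; move: Hv; rewrite /height H0.
have := height_found Hn (found Hn) => /leaf_withinP[[|u p] [Hs Hp Hl]]; first by rewrite Hv in Hs.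
move: Hp => /= /andP[Hvu Hp].
exists u; split => //.
have Hnu : #|N u| != 0 by exact: nbhd_nonempty Hvu.
have H1 : ht u <= k.
  apply: height_min => //; apply/leaf_withinP; exists p; split => //.
  by move: Hs; rewrite Hv /= => -[].
have H2 := height_adj Hvu; lia.
Qed.

Lemma adj_ht u v : e u v -> ht u = (ht v).+1 \/ ht v = (ht u).+1.
Proof.
move=> H; have H1 := height_adj H; have H2 := height_adj (u:=v) (v:=u).
rewrite esym in H2; have {}H2 := H2 H; have H3 := bal H; lia.
Qed.


Lemma leaf_nbr l a b : leaf e l -> e l a -> e l b -> a = b.
Proof.
rewrite /leaf => /cards1P[c Hc] Ha Hb.
have : a \in N l by rewrite inN esym.
have : b \in N l by rewrite inN esym.
by rewrite Hc !inE => /eqP -> /eqP ->.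
Qed.

Lemma leaf_nbr_ht l a : leaf e l -> e l a -> ht a = 1.
Proof.
move=> Hl Ha; have H0 := leaf_height0 Hl; have := adj_ht Ha; rewrite H0; lia.
Qed.

Lemma ht1_leaf s : ht s = 1 -> exists l, e s l /\ leaf e l.
Proof.
move=> Hs; have [u [Hsu Hu]] := height_down Hs.
by exists u; split => //; apply: height0_leaf => //; exact: nbhd_nonempty Hsu.
Qed.

Lemma ht_nbhd v : ht v != 0 -> #|N v| != 0.
Proof. by apply: contra => /eqP H0; rewrite /height H0. Qed.

Lemma two_nbrs v a : ht v != 0 -> exists b, e v b /\ b != a.
Proof.
move=> Hv; have Hn := ht_nbhd Hv.
have Hnl : ~~ leaf e v by apply: contra Hv => /leaf_height0 ->.
have : 1 < #|N v| by move: Hn Hnl; rewrite /leaf; lia.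
move=> /card_gt1P[x [y [Hx Hy Hxy]]]; rewrite !inN in Hx Hy.
case: (eqVneq x a) => [Exa|Hxa]; last by exists x; rewrite esym.
by exists y; rewrite esym Hy; split => //; rewrite -Exa eq_sym.
Qed.

Lemma TDP D : TDset e D <-> forall v, exists2 d, d \in D & e v d.
Proof.
rewrite /TDset; split => [H v|H].
  have : v \in nbhdS e D by rewrite H inE.
  by move=> /bigcupP[d Hd]; rewrite inN => ?; exists d.
apply/setP => v; rewrite inE; have [d Hd Hv] := H v.
by apply/bigcupP; exists d; rewrite ?inN.
Qed.

Lemma notTD D : ~ TDset e D -> exists v, forall d, d \in D -> ~~ e v d.
Proof.
rewrite /TDset => H.
have : ~~ ([set: T] \subset nbhdS e D).
  by apply/negP => Hs; apply: H; apply/eqP; rewrite eqEsubset subsetT.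
move=> /subsetPn[v _ Hv]; exists v => d Hd; apply/negP => Hvd.
by move/negP: Hv; apply; apply/bigcupP; exists d; rewrite ?inN.
Qed.

Lemma private D d : minimal_TDset e D -> d \in D ->
  exists u, e u d /\ forall d', d' \in D -> e u d' -> d' = d.
Proof.
move=> [HT Hmin] Hd.
have [u Hu] := notTD (Hmin _ (properD1 Hd)).
have [d0 Hd0 Hud0] := (iffLR (TDP D) HT) u.
have Ed0 : d0 = d.
  case: (eqVneq d0 d) => // Hne; exfalso.
  by have := Hu d0; rewrite in_setD1 Hne Hd0 Hud0 => /(_ isT).
exists u; split; first by rewrite -Ed0.
move=> d' Hd' Hud'; case: (eqVneq d' d) => // Hne; exfalso.
by have := Hu d'; rewrite in_setD1 Hne Hd' Hud' => /(_ isT).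
Qed.

Lemma exists_minimal (X : {set T}) : TDset e X -> exists D : {set T}, D \subset X /\ minimal_TDset e D.
Proof.
move: {2}#|X| (leqnn #|X|) => k; elim: k X => [|k IH] X Hk HX.
  exists X; split => //; split => // D' HD' HD'T.
  by have := proper_card HD'; lia.
case: (boolP [exists D' : {set T}, (D' \proper X) && (nbhdS e D' == setT)]).
  move=> /existsP[D' /andP[Hp /eqP HT']].
  have Hk' : #|D'| <= k by have := proper_card Hp; lia.
  have [D [HD Hm]] := IH D' Hk' HT'.
  by exists D; split => //; apply: subset_trans HD (proper_sub Hp).
move=> /existsPn Hno; exists X; split => //; split => // D' HD' HT'.
by have := Hno D'; rewrite HD' /= HT' eqxx.
Qed.

Lemma forced (X D : {set T}) v f : D \subset X -> TDset e D ->
  (forall a, a \in X -> e v a -> a = f) -> f \in D.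
Proof.
move=> HDX HT Hf; have [d Hd Hvd] := (iffLR (TDP D) HT) v.
by rewrite -(Hf d (subsetP HDX d Hd) Hvd).
Qed.

Lemma unmixed_contra (D D1 : {set T}) : unmixed e -> minimal_TDset e D ->
  TDset e D1 -> #|D1| < #|D| -> False.
Proof.
move=> Hu HD HT1 Hlt; have [D' [Hs Hm]] := exists_minimal HT1.
have := Hu _ _ Hm HD; have := subset_leq_card Hs; lia.
Qed.

Lemma swapTD (D : {set T}) a b c : TDset e D -> a \in D -> b \in D -> a != b ->
  c \notin D ->
  (forall v, e v a -> e v c \/ exists2 d, d \in D :\: [set a; b] & e v d) ->
  (forall v, e v b -> e v c \/ exists2 d, d \in D :\: [set a; b] & e v d) ->
  TDset e (c |: (D :\: [set a; b])) /\ #|c |: (D :\: [set a; b])| < #|D|.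
Proof.
move=> HT Ha Hb Hab Hc Hva Hvb; split.
  apply/TDP => v; have [d Hd Hvd] := (iffLR (TDP D) HT) v.
  have Hgen : e v c \/ (exists2 d, d \in D :\: [set a; b] & e v d) ->
      exists2 d, d \in c |: (D :\: [set a; b]) & e v d.
    case=> [Hvc|[d' Hd' Hvd']]; first by exists c; rewrite ?setU11.
    by exists d'; rewrite // inE Hd' orbT.
  apply: Hgen; case: (eqVneq d a) => [Eda|Hda]; first by apply: Hva; rewrite -Eda.
  case: (eqVneq d b) => [Edb|Hdb]; first by apply: Hvb; rewrite -Edb.
  by right; exists d; rewrite // !inE negb_or Hda Hdb Hd.
have HI : D :&: [set a; b] = [set a; b].
  by apply/setIidPr; apply/subsetP => z; rewrite !inE => /orP[] /eqP ->.
rewrite cardsU1 cardsD HI cards2 Hab.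
have : #|[set a; b]| <= #|D| by rewrite -HI subset_leq_card // subsetIl.
rewrite cards2 Hab.
case: (c \notin D :\: [set a; b]); lia.
Qed.

Lemma acyc z a b p : ~ has_cycle e -> e z a -> e z b -> a != b ->
  path e a p -> last a p = b -> z \notin a :: p -> False.
Proof.
move=> Hnc Hza Hzb Hab Hp Hl Hz; case: (shortenP Hp) Hl => p' Hp' Hu Hsub Hl.
apply: Hnc; exists (z :: a :: p'); split => //.
- rewrite /= -/(uniq (a :: p')) Hu andbT.
  apply: contra Hz; rewrite !inE => /orP[->//|Hzp].
  by rewrite (Hsub _ Hzp) orbT.
- by case: p' {Hp' Hu Hsub} Hl => [/= Hl|]; [move: Hab; rewrite Hl eqxx|].
- rewrite /cycle rcons_path /= Hza Hp' /= Hl; by rewrite esym.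
Qed.

Lemma triangle a b c : ~ has_cycle e -> e a b -> e b c -> e c a -> False.
Proof.
move=> Hnc Hab Hbc Hca.
apply: (acyc (z := a) (a := b) (b := c) (p := [:: c])) => //.
- by rewrite esym.
- exact: adj_neq.
- by rewrite /= Hbc.
- by rewrite !inE negb_or !adj_neq // esym.
Qed.

Lemma nonisol : is_tree e -> (exists u v, e u v) -> forall z, exists a, e z a.
Proof.
move=> [_ _ Hcon _] [u [v Huv]] z.
case: (eqVneq z u) => [->|Hzu]; first by exists v.
have := Hcon z u => /connectP[[|a p] /= Hp Hl]; first by rewrite Hl eqxx in Hzu.
by move: Hp => /andP[Hza _]; exists a.
Qed.


Hypothesis Hnc : ~ has_cycle e.
Hypothesis Hiso : forall z, exists a, e z a.

Lemma last_rev_belast (x : T) p : last (last x p) (rev (belast x p)) = x.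
Proof. by case: p => [|y p] //=; rewrite rev_cons last_rcons. Qed.

Lemma X_TD (R : {set T}) (h : T) :
  (forall r, r \in R -> exists p, [/\ path e r p, last r p = h &
       forall q, q \in p -> exists2 a, a \notin R & e q a]) ->
  (forall z a, leaf e z -> e z a -> a \notin R) ->
  TDset e (~: R).
Proof.
move=> HW HL; apply/TDP => z.
case: (boolP [exists a, (a \notin R) && e z a]) => [/existsP[a /andP[Ha Hza]]|].
  by exists a; rewrite ?inE.
move=> /existsPn Hall.
have Hin : forall a, e z a -> a \in R.
  by move=> a Hza; have := Hall a; rewrite Hza andbT negbK.
exfalso; have [a Hza] := Hiso z.
case: (boolP (leaf e z)) => Hlz; first by have := HL _ _ Hlz Hza; rewrite Hin.
have Hhz : ht z != 0.
  apply/negP => /eqP H0; move/negP: Hlz; apply; apply: height0_leaf => //.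
  by apply: (nbhd_nonempty (u := a)); rewrite esym.
have [b [Hzb Hba]] := two_nbrs a Hhz.
have [pa [Hpa Hla Hqa]] := HW a (Hin a Hza).
have [pb [Hpb Hlb Hqb]] := HW b (Hin b Hzb).
apply: (acyc Hnc (z := z) (a := a) (b := b) (p := pa ++ rev (belast b pb))) => //.
- by rewrite eq_sym.
- rewrite cat_path Hpa Hla -Hlb rev_path /=.
  by rewrite (@eq_path _ _ e) // => x y; rewrite esym.
- by rewrite last_cat Hla -Hlb last_rev_belast.
- rewrite inE negb_or (adj_neq Hza) /= mem_cat negb_or mem_rev.
  apply/andP; split.
    by apply/negP => /Hqa[c Hc Hzc]; rewrite (Hin c Hzc) in Hc.
  apply/negP => /mem_belast; rewrite inE => /orP[/eqP Ezb|/Hqb[c Hc Hzc]].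
    by move: (adj_neq Hzb); rewrite Ezb eqxx.
  by rewrite (Hin c Hzc) in Hc.
Qed.


Hypothesis Hunm : unmixed e.

Lemma Gen (b w q sq : T) (I : {set T}) (vw ff : T -> T) :
  e b w -> e w q -> q != b -> e q sq -> ht sq = 1 -> ~~ e b sq ->
  (forall a, e a b -> a != w -> exists2 i, i \in I & e a (ff i) && (ff i != b)) ->
  (forall i, i \in I -> e (vw i) (ff i)) ->
  let R := (N w :\ b) :|: (\bigcup_(i in I) (N (vw i) :\ ff i)) :|: (N sq :&: Vh e 2) in
  TDset e (~: R) -> b \notin R -> (forall i, i \in I -> ff i \notin R) -> False.
Proof.
move=> Hbw Hwq Hqb Hqs Hsq Hbs Hcov Hvf R HX HbR HfR.
have [D [HDX Hm]] := exists_minimal HX; have HT := Hm.1.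
have HbD : b \in D.
  apply: (forced (v := w) HDX HT) => a; rewrite inE => HaR Hwa.
  case: (eqVneq a b) => // Hab; exfalso; move/negP: HaR; apply.
  by rewrite !inE Hab /= esym Hwa.
have HfD : forall i, i \in I -> ff i \in D.
  move=> i Hi; apply: (forced (v := vw i) HDX HT) => a; rewrite inE => HaR Hva.
  case: (eqVneq a (ff i)) => // Haf; exfalso; move/negP: HaR; apply.
  rewrite !inE; apply/orP; left; apply/orP; right.
  by apply/bigcupP; exists i => //; rewrite !inE Haf /= esym Hva.
have [l Hl Hsl] := (iffLR (TDP D) HT) sq.
have HlR : l \notin R by have := subsetP HDX l Hl; rewrite inE.
have Hl0 : ht l = 0.
  have := adj_ht Hsl; rewrite Hsq => -[|] Hh; first lia.
  by exfalso; move/negP: HlR; apply; rewrite !inE [e l sq]esym Hsl Hh eqxx /= orbT.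
have Hll : leaf e l by apply: height0_leaf => //; exact: nbhd_nonempty Hsl.
have HqD : q \notin D.
  apply/negP => /(subsetP HDX); rewrite inE; apply/negP; apply/negPn.
  by rewrite !inE Hqb /= esym Hwq.
have Hbl : b != l by apply/negP => /eqP Ebl; move/negP: Hbs; apply; rewrite Ebl esym.
have Hsq_q : e sq q by rewrite esym.
have Ha : forall v, e v b -> e v q \/ exists2 d, d \in D :\: [set b; l] & e v d.
  move=> v Hvb; case: (eqVneq v w) => [->|Hvw]; first by left.
  have [i Hi /andP[Hvfi Hfb]] := Hcov v Hvb Hvw.
  case: (eqVneq (ff i) l) => [Efl|Hfl].
    left; have -> : v = sq.
      by apply: (leaf_nbr Hll); [rewrite esym -Efl | rewrite esym].
    done.
  by right; exists (ff i) => //; rewrite !inE negb_or Hfb Hfl HfD.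
have Hb' : forall v, e v l -> e v q \/ exists2 d, d \in D :\: [set b; l] & e v d.
  move=> v Hvl; left; have -> : v = sq by apply: (leaf_nbr Hll); rewrite esym.
  done.
have [HT1 Hlt] := swapTD HT HbD Hl Hbl HqD Ha Hb'.
exact: (unmixed_contra Hunm Hm HT1 Hlt).
Qed.


Lemma ht_neq u v : ht u != ht v -> u != v.
Proof. by apply: contra => /eqP ->. Qed.

Lemma adj_ht_ne u v k : e u v -> ht u = k -> ht v = k -> False.
Proof. by move=> H Hu Hv; have := bal H; rewrite Hu Hv eqxx. Qed.

Lemma caseB x s1 s2 : e x s1 -> e x s2 -> ht s1 = 1 -> ht s2 = 1 -> s1 != s2 -> False.
Proof.
move=> Hx1 Hx2 Hs1 Hs2 Hs12.
have [l2 [Hs2l Hl2]] := ht1_leaf Hs2.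
have [l1 [Hs1l Hl1]] := ht1_leaf Hs1.
have Hx : ht x = 2.
  have := adj_ht Hx1; rewrite Hs1 => -[//|H]; exfalso.
  have Hlx : leaf e x by apply: height0_leaf; [apply: (nbhd_nonempty (u := s1)); rewrite esym | lia].
  by move/negP: Hs12; apply; apply/eqP; apply: (leaf_nbr Hlx).
have Hl20 := leaf_height0 Hl2; have Hl10 := leaf_height0 Hl1.
have Hl2s1 : ~~ e l2 s1.
  apply/negP => H; move/negP: Hs12; apply; apply/eqP.
  by apply: (leaf_nbr Hl2) => //; rewrite esym.
have Hl1s2 : ~~ e l1 s2.
  apply/negP => H; move/negP: Hs12; apply; apply/eqP.
  by apply: (leaf_nbr Hl1) => //; rewrite esym.
apply: (Gen (b := l2) (w := s2) (q := x) (sq := s1) (I := set0) (vw := id) (ff := id)).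
- by rewrite esym.
- by rewrite esym.
- by apply: ht_neq; rewrite Hx Hl20.
- done.
- done.
- done.
- move=> a Hal Has2; exfalso; move/negP: Has2; apply; apply/eqP.
  by apply: (leaf_nbr Hl2); rewrite esym.
- by move=> i; rewrite inE.
- rewrite big_set0 setU0.
  have HR1 : forall a, ht a = 1 -> a \notin (N s2 :\ l2) :|: (N s1 :&: Vh e 2).
    move=> a Ha; rewrite !inE; apply/negP => /orP[/andP[_ H]|/andP[_ H]].
      exact: adj_ht_ne H Ha Hs2.
    by rewrite Ha in H.
  apply: (X_TD (h := x)) => [r|z a Hz Hza]; last first.
    by apply: HR1; apply: leaf_nbr_ht Hz Hza.
  rewrite !inE => /orP[/andP[Hrl Hr]|/andP[Hr _]].
  + exists [:: s2; x]; split; rewrite /= ?Hr ?(esym s2 x) ?Hx2 //.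
    move=> q; rewrite !inE => /orP[/eqP ->|/eqP ->].
      exists l2 => //; apply/negP; rewrite !inE => /orP[/andP[H _]|/andP[H _]].
        by rewrite eqxx in H.
      by rewrite H in Hl2s1.
    by exists s1 => //; apply: HR1.
  + exists [:: s1; x]; split; rewrite /= ?Hr ?(esym s1 x) ?Hx1 //.
    move=> q; rewrite !inE => /orP[/eqP ->|/eqP ->].
      exists l1 => //; apply/negP; rewrite !inE => /orP[/andP[_ H]|/andP[_ H]].
        by rewrite H in Hl1s2.
      by rewrite Hl10 in H.
    by exists s1 => //; apply: HR1.
- rewrite big_set0 setU0; apply/negP; rewrite !inE => /orP[/andP[H _]|/andP[H _]].
    by rewrite eqxx in H.
  by rewrite H in Hl2s1.
- by move=> i; rewrite inE.
Qed.


Definition pick_in (A : {set T}) (d : T) := odflt d [pick a in A].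

Lemma pick_inP (A : {set T}) d : (exists a, a \in A) -> pick_in A d \in A.
Proof.
move=> [a Ha]; rewrite /pick_in; case: pickP => [b Hb|H] //=.
by have := H a; rewrite Ha.
Qed.

Lemma notinR w b (I : {set T}) (vw ff : T -> T) sq r :
  (r != b -> ~~ e r w) -> (forall i, i \in I -> r != ff i -> ~~ e r (vw i)) ->
  (e r sq -> ht r != 2) ->
  r \notin (N w :\ b) :|: (\bigcup_(i in I) (N (vw i) :\ ff i)) :|: (N sq :&: Vh e 2).
Proof.
move=> H1 H2 H3; apply/negP; rewrite !inE => /orP[/orP[/andP[Hb Hw]|/bigcupP[i Hi]]|/andP[Hs Hh]].
- by rewrite Hw in H1; apply/negP: (H1 Hb).
- by rewrite !inE => /andP[Hf Hv]; move/negP: (H2 i Hi Hf); rewrite Hv.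
- by move/negP: (H3 Hs); rewrite Hh.
Qed.

Lemma inR w b (I : {set T}) (vw ff : T -> T) sq r :
  r \in (N w :\ b) :|: (\bigcup_(i in I) (N (vw i) :\ ff i)) :|: (N sq :&: Vh e 2) ->
  [\/ r != b /\ e r w, exists2 i, i \in I & (r != ff i /\ e r (vw i)) | e r sq /\ ht r = 2].
Proof.
rewrite !inE => /orP[/orP[/andP[Hb Hw]|/bigcupP[i Hi]]|/andP[Hs /eqP Hh]].
- by constructor 1.
- by rewrite !inE => /andP[Hf Hv]; constructor 2; exists i.
- by constructor 3.
Qed.


Lemma nadj u v : ht u != (ht v).+1 -> ht v != (ht u).+1 -> ~~ e u v.
Proof. by move=> H1 H2; apply/negP => /adj_ht[/eqP|/eqP]; [rewrite (negbTE H1) | rewrite (negbTE H2)]. Qed.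

Lemma forall_in (P : T -> Prop) (p : seq T) :
  foldr (fun q acc => P q /\ acc) True p -> forall q, q \in p -> P q.
Proof.
elim: p => [|a p IH] //= [Ha Hp] q; rewrite inE => /orP[/eqP ->//|Hq].
exact: IH.
Qed.

Ltac adj := first [assumption | rewrite esym; assumption].
Ltac pathtac := rewrite /= ?andbT; repeat (apply/andP; split); adj.
Ltac htne := apply: ht_neq; repeat match goal with | H : ht ?x = _ |- context [ht ?x] => rewrite H end; done.
Ltac notin_tac := rewrite !inE; repeat (apply/norP; split);
  try done; try (by apply: adj_neq; adj); try htne.

Lemma caseA t : ht t = 4 -> False.
Proof.
move=> Ht.
have [w [Htw Hw]] := height_down (k := 3) Ht.
have [xw [Hwx Hxw]] := height_down Hw.
have [sq [Hxs Hsq]] := height_down Hxw.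
pose U3 := N t :&: Vh e 3 :\ w.
pose Y5 := N t :&: Vh e 5.
pose I := U3 :|: Y5.
pose xu i := pick_in (N i :&: Vh e 2) i.
pose sg i := pick_in (N (xu i) :&: Vh e 1) i.
pose cc i := pick_in (N i :\ t) i.
pose vv i := pick_in (N (cc i) :\ i) i.
pose vw i := if i \in Y5 then vv i else sg i.
pose ff i := if i \in Y5 then cc i else xu i.
have HU3 : forall i, i \in U3 -> [/\ e i t, ht i = 3 & i != w].
  by move=> i; rewrite !inE => /and3P[-> -> /eqP ->].
have HY5 : forall i, i \in Y5 -> e i t /\ ht i = 5.
  by move=> i; rewrite !inE => /andP[-> /eqP ->].
have HU3Y : forall i, i \in U3 -> i \notin Y5.
  by move=> i /HU3[_ H _]; apply/negP => /HY5[_]; rewrite H.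
have Hxu : forall i, i \in U3 -> e (xu i) i /\ ht (xu i) = 2.
  move=> i /HU3[_ Hi _].
  have : xu i \in N i :&: Vh e 2.
    apply: pick_inP; have [u [Hiu Hu]] := height_down Hi.
    by exists u; rewrite !inE Hu eqxx andbT esym.
  by rewrite !inE => /andP[-> /eqP ->].
have Hsg : forall i, i \in U3 -> e (sg i) (xu i) /\ ht (sg i) = 1.
  move=> i /Hxu[_ Hi].
  have : sg i \in N (xu i) :&: Vh e 1.
    apply: pick_inP; have [u [Hiu Hu]] := height_down Hi.
    by exists u; rewrite !inE Hu eqxx andbT esym.
  by rewrite !inE => /andP[-> /eqP ->].
have Hcc : forall i, i \in Y5 -> [/\ e (cc i) i, cc i != t & (ht (cc i) = 4 \/ ht (cc i) = 6)].
  move=> i /HY5[_ Hi].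
  have : cc i \in N i :\ t.
    have Hi0 : ht i != 0 by rewrite Hi.
    apply: pick_inP; have [b [Hib Hbt]] := two_nbrs t Hi0.
    exists b; rewrite !inE Hbt esym //.
  rewrite !inE => /andP[Hct Hci]; split => //.
  by have := adj_ht Hci; rewrite Hi; lia.
have Hvv : forall i, i \in Y5 -> [/\ e (vv i) (cc i), vv i != i & 3 <= ht (vv i)].
  move=> i Hi; have [_ _ Hch] := Hcc i Hi.
  have : vv i \in N (cc i) :\ i.
    have Hc0 : ht (cc i) != 0 by case: Hch => ->.
    apply: pick_inP; have [b [Hib Hbt]] := two_nbrs i Hc0.
    exists b; rewrite !inE Hbt esym //.
  rewrite !inE => /andP[Hvi Hvc]; split => //.
  by have := adj_ht Hvc; lia.
have A2' : forall j, j \in Y5 -> vv j != t.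
  move=> j Hj; have [Hjt _] := HY5 j Hj; have [Hcj Hct _] := Hcc j Hj.
  have [Hvc _ _] := Hvv j Hj.
  apply/negP => /eqP Evt; rewrite Evt in Hvc.
  by apply: (triangle Hnc (a := t) (b := cc j) (c := j)); adj.
have A2 : forall j, j \in Y5 -> ~~ e t (vv j).
  move=> j Hj; have [Hjt _] := HY5 j Hj; have [Hcj Hct _] := Hcc j Hj.
  have [Hvc Hvj _] := Hvv j Hj.
  apply/negP => Htv.
  apply: (acyc Hnc (z := vv j) (a := t) (b := cc j) (p := [:: j; cc j])) => //; try adj.
  - by rewrite eq_sym.
  - pathtac.
  - notin_tac.
have A1 : forall j, j \in Y5 -> ~~ e (vv j) w.
  move=> j Hj; have [Hjt Hj5] := HY5 j Hj; have [Hcj Hct Hch] := Hcc j Hj.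
  have [Hvc Hvj _] := Hvv j Hj; have := A2' j Hj => Hvt.
  apply/negP => Hvw.
  apply: (acyc Hnc (z := vv j) (a := w) (b := cc j) (p := [:: t; j; cc j])) => //; try adj.
  - by apply: ht_neq; case: Hch => ->; rewrite Hw.
  - pathtac.
  - notin_tac.
have A3 : forall y j, y \in Y5 -> j \in Y5 -> y != cc j -> ~~ e y (vv j).
  move=> y j Hy Hj Hyc; have [Hyt Hy5] := HY5 y Hy; have [Hjt Hj5] := HY5 j Hj.
  have [Hcj Hct Hch] := Hcc j Hj.
  have [Hvc Hvj _] := Hvv j Hj; have := A2' j Hj => Hvt.
  apply/negP => Hyv.
  apply: (acyc Hnc (z := vv j) (a := y) (b := cc j) (p := [:: t; j; cc j])) => //; try adj.
  - pathtac.
  - notin_tac.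
have A4 : forall i, i \in U3 -> ~~ e sq (xu i).
  move=> i Hi; have [Hit Hi3 Hiw] := HU3 i Hi; have [Hxi Hxi2] := Hxu i Hi.
  apply/negP => Hsx.
  case: (eqVneq xw (xu i)) => [Exw|Hne].
    apply: (acyc Hnc (z := xw) (a := w) (b := i) (p := [:: t; i])) => //; try adj.
    - by rewrite Exw; adj.
    - by rewrite eq_sym.
    - pathtac.
    - notin_tac.
  apply: (acyc Hnc (z := sq) (a := xw) (b := xu i) (p := [:: w; t; i; xu i])) => //; try adj.
  - pathtac.
  - notin_tac.
have A5 : forall i, i \in U3 -> ~~ e (xu i) w.
  move=> i Hi; have [Hit Hi3 Hiw] := HU3 i Hi; have [Hxi Hxi2] := Hxu i Hi.
  apply/negP => Hxw'.
  apply: (acyc Hnc (z := xu i) (a := w) (b := i) (p := [:: t; i])) => //; try adj.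
  - by rewrite eq_sym.
  - pathtac.
  - notin_tac.
have A6 : forall i j, i \in U3 -> j \in U3 -> xu i != xu j -> ~~ e (xu i) (sg j).
  move=> i j Hi Hj Hij; have [Hit Hi3 Hiw] := HU3 i Hi; have [Hxi Hxi2] := Hxu i Hi.
  have [Hjt Hj3 Hjw] := HU3 j Hj; have [Hxj Hxj2] := Hxu j Hj; have [Hsj Hsj1] := Hsg j Hj.
  apply/negP => Hxs'.
  apply: (acyc Hnc (z := sg j) (a := xu i) (b := xu j) (p := [:: i; t; j; xu j])) => //; try adj.
  - pathtac.
  - notin_tac.
have A7 : forall i j, i \in U3 -> j \in Y5 -> ~~ e (xu i) (vv j).
  move=> i j Hi Hj; have [Hit Hi3 Hiw] := HU3 i Hi; have [Hxi Hxi2] := Hxu i Hi.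
  have [Hjt Hj5] := HY5 j Hj; have [Hcj Hct Hch] := Hcc j Hj.
  have [Hvc Hvj _] := Hvv j Hj; have := A2' j Hj => Hvt; have := A2 j Hj => Htv.
  apply/negP => Hxv.
  apply: (acyc Hnc (z := vv j) (a := xu i) (b := cc j) (p := [:: i; t; j; cc j])) => //; try adj.
  - by apply: ht_neq; case: Hch => ->; rewrite Hxi2.
  - pathtac.
  - notin_tac.
    by apply/negP => /eqP Evi; move/negP: Htv; apply; rewrite Evi esym.
have A9 : forall j, j \in Y5 -> ~~ e (cc j) w.
  move=> j Hj; have [Hjt Hj5] := HY5 j Hj; have [Hcj Hct Hch] := Hcc j Hj.
  apply/negP => Hcw.
  apply: (acyc Hnc (z := w) (a := cc j) (b := t) (p := [:: j; t])) => //; try adj.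
  - pathtac.
  - notin_tac.
have A10 : forall i j, i \in Y5 -> j \in Y5 -> cc i != cc j -> ~~ e (cc i) (vv j).
  move=> i j Hi Hj Hij; have [Hit Hi5] := HY5 i Hi; have [Hci Hcit Hchi] := Hcc i Hi.
  have [Hjt Hj5] := HY5 j Hj; have [Hcj Hct Hch] := Hcc j Hj.
  have [Hvc Hvj _] := Hvv j Hj; have := A2' j Hj => Hvt; have := A2 j Hj => Htv.
  apply/negP => Hcv.
  apply: (acyc Hnc (z := vv j) (a := cc i) (b := cc j) (p := [:: i; t; j; cc j])) => //; try adj.
  - pathtac.
  - notin_tac.
    by apply/negP => /eqP Evi; move/negP: Htv; apply; rewrite Evi esym.
pose R := (N w :\ t) :|: (\bigcup_(i in I) (N (vw i) :\ ff i)) :|: (N sq :&: Vh e 2).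
have HIcase : forall (P : T -> Prop), (forall i, i \in U3 -> P i) -> (forall i, i \in Y5 -> P i) ->
    forall i, i \in I -> P i.
  by move=> P H1 H2 i; rewrite inE => /orP[/H1|/H2].
have ffU : forall i, i \in U3 -> ff i = xu i /\ vw i = sg i.
  by move=> i /HU3Y Hi; rewrite /ff /vw (negbTE Hi).
have ffY : forall i, i \in Y5 -> ff i = cc i /\ vw i = vv i.
  by move=> i Hi; rewrite /ff /vw Hi.
have F1 : forall r, ht r = 1 -> r \notin R.
  move=> r Hr; apply: notinR.
  - by move=> _; apply: nadj; rewrite Hr Hw.
  - apply: (HIcase) => i Hi; [have [-> ->] := ffU i Hi | have [-> ->] := ffY i Hi] => _.
      by have [_ Hs] := Hsg i Hi; apply/negP => H; apply: (adj_ht_ne H Hr Hs).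
    by have [_ _ Hv] := Hvv i Hi; apply: nadj; rewrite Hr; lia.
  - by rewrite Hr.
have F10 : t \notin R.
  apply: notinR; first by rewrite eqxx.
  - apply: (HIcase) => i Hi; [have [-> ->] := ffU i Hi | have [-> ->] := ffY i Hi] => _.
      by have [_ Hs] := Hsg i Hi; apply: nadj; rewrite Hs Ht.
    exact: A2.
  - by rewrite Ht.
have F2 : w \notin R.
  apply: notinR; first by rewrite eirr.
  - apply: (HIcase) => i Hi; [have [-> ->] := ffU i Hi | have [-> ->] := ffY i Hi] => _.
      by have [_ Hs] := Hsg i Hi; apply: nadj; rewrite Hs Hw.
    by rewrite esym; exact: A1.
  - by rewrite Hw.
have F4 : forall y, y \in Y5 -> y \notin R.
  move=> y Hy; have [Hyt Hy5] := HY5 y Hy; apply: notinR.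
  - by move=> _; apply: nadj; rewrite Hy5 Hw.
  - apply: (HIcase) => i Hi; [have [-> ->] := ffU i Hi | have [-> ->] := ffY i Hi] => Hne.
      by have [_ Hs] := Hsg i Hi; apply: nadj; rewrite Hs Hy5.
    exact: A3.
  - by rewrite Hy5.
have [lq [Hsl Hlq]] := ht1_leaf Hsq.
have Hlq0 := leaf_height0 Hlq.
have F5 : lq \notin R.
  apply: notinR.
  - by move=> _; apply: nadj; rewrite Hlq0 Hw.
  - apply: (HIcase) => i Hi; [have [-> ->] := ffU i Hi | have [-> ->] := ffY i Hi] => Hne.
      apply/negP => Hls; have [Hsx _] := Hsg i Hi.
      have Esq : sg i = sq by apply: (leaf_nbr Hlq); [done | rewrite esym].
      by move/negP: (A4 i Hi); apply; rewrite -Esq.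
    by have [_ _ Hv] := Hvv i Hi; apply: nadj; rewrite Hlq0; lia.
  - by rewrite Hlq0.
have F11 : forall i, i \in I -> ff i \notin R.
  apply: (HIcase) => i Hi; [have [-> _] := ffU i Hi | have [-> _] := ffY i Hi].
    have [Hxi Hxi2] := Hxu i Hi; apply: notinR.
    - by move=> _; apply: A5.
    - apply: (HIcase) => j Hj; [have [-> ->] := ffU j Hj | have [-> ->] := ffY j Hj] => Hne.
        exact: A6.
      exact: A7.
    - by move=> Hxs'; move/negP: (A4 i Hi); rewrite esym.
  have [Hci Hcit Hch] := Hcc i Hi; apply: notinR.
  - by move=> _; apply: A9.
  - apply: (HIcase) => j Hj; [have [-> ->] := ffU j Hj | have [-> ->] := ffY j Hj] => Hne.
      by have [_ Hs] := Hsg j Hj; apply: nadj; rewrite Hs; case: Hch => ->.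
    exact: A10.
  - by case: Hch => ->.
have Ht2 : forall a, e a t -> exists2 b, b \notin R & e a b.
  by move=> a Hat; exists t.
have Hw2 : exists2 b, b \notin R & e w b by exists t => //; rewrite esym.
have Htt : exists2 b, b \notin R & e t b by exists w.
apply: (Gen (b := t) (w := w) (q := xw) (sq := sq) (I := I) (vw := vw) (ff := ff)) => //.
- by htne.
- by apply: nadj; rewrite Ht Hsq.
- move=> a Hat Haw; have := adj_ht Hat; rewrite Ht => -[Ha5|Ha3].
    have HaY : a \in Y5 by rewrite !inE Hat Ha5 eqxx.
    exists a; first by rewrite inE HaY orbT.
    have [-> _] := ffY a HaY; have [Hca Hct _] := Hcc a HaY.
    by rewrite esym Hca Hct.
  have HaU : a \in U3 by rewrite !inE Haw Hat /=; apply/eqP; lia.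
  exists a; first by rewrite inE HaU.
  have [-> _] := ffU a HaU; have [Hxa Hxa2] := Hxu a HaU.
  by rewrite esym Hxa /=; htne.
- apply: (HIcase) => i Hi; [have [-> ->] := ffU i Hi | have [-> ->] := ffY i Hi].
    by have [] := Hsg i Hi.
  by have [] := Hvv i Hi.
- rewrite -/R; apply: (X_TD (h := t)); last first.
    by move=> z a Hz Hza; apply: F1; apply: leaf_nbr_ht Hz Hza.
  move=> r /inR[[Hrt Hrw]|[i Hi [Hrf Hrv]]|[Hrs Hr2]].
  + exists [:: w; t]; split => //; first by pathtac.
    by move=> q; rewrite !inE => /orP[] /eqP ->.
  + move: i Hi Hrf Hrv; apply: (HIcase) => i Hi; [have [-> ->] := ffU i Hi | have [-> ->] := ffY i Hi] => Hrf Hrv.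
      have [Hsx _] := Hsg i Hi; have [Hxi _] := Hxu i Hi; have [Hit _ _] := HU3 i Hi.
      exists [:: sg i; xu i; i; t]; split => //; first by pathtac.
      move=> q; rewrite !inE => /or4P[] /eqP ->.
      * by exists (xu i) => //; have := F11 i; rewrite inE Hi /= => /(_ isT); have [-> _] := ffU i Hi.
      * by exists (sg i); [apply: F1; have [] := Hsg i Hi | rewrite esym].
      * by exists t.
      * by [].
    have [Hvc _ _] := Hvv i Hi; have [Hci _ _] := Hcc i Hi; have [Hit _] := HY5 i Hi.
    exists [:: vv i; cc i; i; t]; split => //; first by pathtac.
    move=> q; rewrite !inE => /or4P[] /eqP ->.
    * by exists (cc i) => //; have := F11 i; rewrite inE Hi orbT => /(_ isT); have [-> _] := ffY i Hi.
    * by exists i; [apply: F4 | ].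
    * by exists t.
    * by [].
  + exists [:: sq; xw; w; t]; split => //; first by pathtac.
    move=> q; rewrite !inE => /or4P[] /eqP ->.
    * by exists lq.
    * by exists sq => //; apply: F1.
    * by [].
    * by [].
Qed.

Lemma caseC s x y : (forall v, ht v <= 3) ->
  (forall v, ht v = 2 -> #|N v :&: Vh e 1| = 1) ->
  ht s = 1 -> e s x -> e s y -> ht x = 2 -> ht y = 2 -> x != y -> False.
Proof.
move=> Hle3 H2 Hs Hsx Hsy Hx Hy Hxy.
have uniq1 : forall v a b, ht v = 2 -> e v a -> ht a = 1 -> e v b -> ht b = 1 -> a = b.
  move=> v a b Hv Ha Ha1 Hb Hb1; have /eqP/cards1P[c Hc] := H2 v Hv.
  have : a \in N v :&: Vh e 1 by rewrite !inE esym Ha Ha1 eqxx.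
  have : b \in N v :&: Vh e 1 by rewrite !inE esym Hb Hb1 eqxx.
  by rewrite Hc !inE => /eqP -> /eqP ->.
have up3 : forall v a, ht v = 2 -> e v a -> ht a != 1 -> ht a = 3.
  move=> v a Hv Ha Ha1; have := adj_ht Ha; have := Hle3 a; rewrite Hv; move: Ha1; lia.
have up2 : forall v a, ht v = 3 -> e v a -> ht a = 2.
  move=> v a Hv Ha; have := adj_ht Ha; have := Hle3 a; rewrite Hv; lia.
have Hx0 : ht x != 0 by rewrite Hx.
have Hy0 : ht y != 0 by rewrite Hy.
have [wx [Hxwx Hwxs]] := two_nbrs s Hx0.
have Hwx : ht wx = 3.
  apply: (up3 x) => //; apply/negP => /eqP Hw1; move/negP: Hwxs; apply; apply/eqP.
  by apply: (uniq1 x) => //; rewrite esym.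
have [wy [Hywy Hwys]] := two_nbrs s Hy0.
have Hwy : ht wy = 3.
  apply: (up3 y) => //; apply/negP => /eqP Hw1; move/negP: Hwys; apply; apply/eqP.
  by apply: (uniq1 y) => //; rewrite esym.
have Hwy0 : ht wy != 0 by rewrite Hwy.
have [y' [Hwyy' Hy'y]] := two_nbrs y Hwy0.
have Hy' : ht y' = 2 by apply: (up2 wy).
have [sq [Hy'sq Hsq]] := height_down Hy'.
pose U := N y :&: Vh e 3 :\ wy.
pose yq u := pick_in (N u :\ y) u.
pose sg u := pick_in (N (yq u) :&: Vh e 1) u.
pose I := x |: U.
pose vw i := if i == x then wx else sg i.
pose ff i := if i == x then x else yq i.
have HU : forall u, u \in U -> [/\ e u y, ht u = 3 & u != wy].
  by move=> u; rewrite !inE => /and3P[-> -> /eqP ->].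
have HUx : forall u, u \in U -> u != x by move=> u /HU[_ Hu _]; htne.
have Hyq : forall u, u \in U -> [/\ e (yq u) u, yq u != y & ht (yq u) = 2].
  move=> u Hu; have [Huy Hu3 _] := HU u Hu.
  have Hu0 : ht u != 0 by rewrite Hu3.
  have : yq u \in N u :\ y.
    by apply: pick_inP; have [b [Hub Hby]] := two_nbrs y Hu0; exists b; rewrite !inE Hby esym.
  rewrite !inE => /andP[Hqy Hqu]; split => //; apply: (up2 u) => //; by rewrite esym.
have Hsg : forall u, u \in U -> e (sg u) (yq u) /\ ht (sg u) = 1.
  move=> u Hu; have [_ _ Hq2] := Hyq u Hu.
  have : sg u \in N (yq u) :&: Vh e 1.
    apply: pick_inP; have [b [Hb Hb1]] := height_down Hq2.
    by exists b; rewrite !inE Hb1 eqxx andbT esym.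
  by rewrite !inE => /andP[-> /eqP ->].
have HIcase : forall (P : T -> Prop), P x -> (forall i, i \in U -> P i) ->
    forall i, i \in I -> P i.
  by move=> P H1 H3 i; rewrite in_setU1 => /orP[/eqP ->|/H3].
have ffx : ff x = x /\ vw x = wx by rewrite /ff /vw eqxx.
have ffU : forall i, i \in U -> ff i = yq i /\ vw i = sg i.
  by move=> i /HUx Hi; rewrite /ff /vw (negbTE Hi).
have G1' : forall u, u \in U -> ~~ e s (yq u).
  move=> u Hu; have [Huy Hu3 _] := HU u Hu; have [Hqu Hqy Hq2] := Hyq u Hu.
  apply/negP => Hsq'.
  apply: (acyc Hnc (z := s) (a := yq u) (b := y) (p := [:: u; y])) => //; try adj.
  - pathtac.
  - notin_tac.
have G4 : ~~ e s y'.
  apply/negP => Hsy'.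
  apply: (acyc Hnc (z := s) (a := y') (b := y) (p := [:: wy; y])) => //; try adj.
  - pathtac.
  - notin_tac.
have sqs : forall v, ht v = 2 -> e v s -> e v sq -> False.
  move=> v Hv Hvs Hvq; have Esq : sq = s by apply: (uniq1 v).
  by move/negP: G4; apply; rewrite -Esq esym.
have G2' : forall u, u \in U -> ~~ e sq (yq u).
  move=> u Hu; have [Huy Hu3 Huw] := HU u Hu; have [Hqu Hqy Hq2] := Hyq u Hu.
  apply/negP => Hsq'.
  case: (eqVneq y' (yq u)) => [Ey|Hne].
    apply: (acyc Hnc (z := y') (a := wy) (b := u) (p := [:: y; u])) => //; try adj.
    - by rewrite Ey; adj.
    - by rewrite eq_sym.
    - pathtac.
    - notin_tac.
  apply: (acyc Hnc (z := sq) (a := y') (b := yq u) (p := [:: wy; y; u; yq u])) => //; try adj.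
  - pathtac.
  - notin_tac.
have G7 : ~~ e y wx.
  apply/negP => Hyw.
  apply: (acyc Hnc (z := wx) (a := x) (b := y) (p := [:: s; y])) => //; try adj.
  - pathtac.
  - notin_tac.
have G5a : ~~ e x wy.
  apply/negP => Hxw.
  apply: (acyc Hnc (z := wy) (a := x) (b := y) (p := [:: s; y])) => //; try adj.
  - pathtac.
  - notin_tac.
have G6a : forall u, u \in U -> ~~ e (yq u) wy.
  move=> u Hu; have [Huy Hu3 Huw] := HU u Hu; have [Hqu Hqy Hq2] := Hyq u Hu.
  apply/negP => Hqw.
  apply: (acyc Hnc (z := yq u) (a := u) (b := wy) (p := [:: y; wy])) => //; try adj.
  - pathtac.
  - notin_tac.
have G6b : forall u, u \in U -> yq u != x -> ~~ e (yq u) wx.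
  move=> u Hu Hqx; have [Huy Hu3 Huw] := HU u Hu; have [Hqu Hqy Hq2] := Hyq u Hu.
  apply/negP => Hqw.
  apply: (acyc Hnc (z := wx) (a := yq u) (b := x) (p := [:: u; y; s; x])) => //; try adj.
  - pathtac.
  - notin_tac.
    by apply/negP => /eqP Ewu; move/negP: G7; apply; rewrite Ewu esym.
have G6c : forall u j, u \in U -> j \in U -> yq u != yq j -> ~~ e (yq u) (sg j).
  move=> u j Hu Hj Hne; have [Huy Hu3 Huw] := HU u Hu; have [Hqu Hqy Hq2] := Hyq u Hu.
  have [Hjy Hj3 Hjw] := HU j Hj; have [Hqj Hqjy Hqj2] := Hyq j Hj; have [Hsj Hsj1] := Hsg j Hj.
  apply/negP => Hqs.
  apply: (acyc Hnc (z := sg j) (a := yq u) (b := yq j) (p := [:: u; y; j; yq j])) => //; try adj.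
  - pathtac.
  - notin_tac.
pose R := (N wy :\ y) :|: (\bigcup_(i in I) (N (vw i) :\ ff i)) :|: (N sq :&: Vh e 2).
have F1 : forall r, ht r = 1 -> r \notin R.
  move=> r Hr; apply: notinR.
  - by move=> _; apply: nadj; rewrite Hr Hwy.
  - apply: (HIcase); first by have [-> ->] := ffx => _; apply: nadj; rewrite Hr Hwx.
    move=> i Hi; have [-> ->] := ffU i Hi => _.
    by have [_ Hs1] := Hsg i Hi; apply/negP => H; apply: (adj_ht_ne H Hr Hs1).
  - by rewrite Hr.
have F3 : y \notin R.
  apply: notinR; first by rewrite eqxx.
  - apply: (HIcase); first by have [-> ->] := ffx.
    move=> i Hi; have [-> ->] := ffU i Hi => _.
    have [Hsi Hsi1] := Hsg i Hi; apply/negP => Hys.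
    have Es : sg i = s by apply: (uniq1 y) => //; rewrite esym.
    by move/negP: (G1' i Hi); apply; rewrite -Es.
  - by move=> Hys; exfalso; apply: (sqs y) => //; rewrite esym.
have F5 : x \notin R.
  apply: notinR; first by move=> _; exact: G5a.
  - apply: (HIcase); first by have [-> ->] := ffx; rewrite eqxx.
    move=> i Hi; have [-> ->] := ffU i Hi => _.
    have [Hsi Hsi1] := Hsg i Hi; apply/negP => Hxs.
    have Es : sg i = s by apply: (uniq1 x) => //; rewrite esym.
    by move/negP: (G1' i Hi); apply; rewrite -Es.
  - by move=> Hxs; exfalso; apply: (sqs x) => //; rewrite esym.
have F6 : forall u, u \in U -> yq u \notin R.
  move=> u Hu; have [Hqu Hqy Hq2] := Hyq u Hu; apply: notinR.
  - by move=> _; exact: G6a.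
  - apply: (HIcase); first by have [-> ->] := ffx => Hne; exact: G6b.
    move=> i Hi; have [-> ->] := ffU i Hi => Hne; exact: G6c.
  - by move=> Hqs; exfalso; move/negP: (G2' u Hu); apply; rewrite esym.
have [ls [Hsls Hls]] := ht1_leaf Hs; have Hls0 := leaf_height0 Hls.
have G1 : ls \notin R.
  apply: notinR.
  - by move=> _; apply: nadj; rewrite Hls0 Hwy.
  - apply: (HIcase); first by have [-> ->] := ffx => _; apply: nadj; rewrite Hls0 Hwx.
    move=> i Hi; have [-> ->] := ffU i Hi => _.
    have [Hsi Hsi1] := Hsg i Hi; apply/negP => Hl.
    have Es : sg i = s by apply: (leaf_nbr Hls) => //; rewrite esym.
    by move/negP: (G1' i Hi); apply; rewrite -Es.
  - by rewrite Hls0.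
have [lq [Hsql Hlq]] := ht1_leaf Hsq; have Hlq0 := leaf_height0 Hlq.
have G2 : lq \notin R.
  apply: notinR.
  - by move=> _; apply: nadj; rewrite Hlq0 Hwy.
  - apply: (HIcase); first by have [-> ->] := ffx => _; apply: nadj; rewrite Hlq0 Hwx.
    move=> i Hi; have [-> ->] := ffU i Hi => _.
    have [Hsi Hsi1] := Hsg i Hi; apply/negP => Hl.
    have Es : sg i = sq by apply: (leaf_nbr Hlq) => //; rewrite esym.
    by move/negP: (G2' i Hi); apply; rewrite -Es.
  - by rewrite Hlq0.
have Xs : exists2 a, a \notin R & e s a by exists ls.
have Xy : exists2 a, a \notin R & e y a by exists s => //; [apply: F1 | rewrite esym].
have Xwy : exists2 a, a \notin R & e wy a by exists y => //; rewrite esym.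
have Xx : exists2 a, a \notin R & e x a by exists s => //; [apply: F1 | rewrite esym].
have Xwx : exists2 a, a \notin R & e wx a by exists x => //; rewrite esym.
apply: (Gen (b := y) (w := wy) (q := y') (sq := sq) (I := I) (vw := vw) (ff := ff)) => //.
- by apply/negP => Hys; apply: (sqs y) => //; rewrite esym.
- move=> a Hay Haw.
  case: (eqVneq (ht a) 1) => [Ha1|Ha1].
    have Eas : a = s by apply: (uniq1 y) => //; rewrite esym.
    exists x; first by rewrite in_setU1 eqxx.
    by have [-> _] := ffx; rewrite Eas Hsx Hxy.
  have Ha3 : ht a = 3 by apply: (up3 y) => //; rewrite esym.
  have HaU : a \in U by rewrite !inE Haw Hay Ha3 eqxx.
  exists a; first by rewrite in_setU1 HaU orbT.
  have [-> _] := ffU a HaU; have [Hqa Hqy _] := Hyq a HaU.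
  by rewrite esym Hqa Hqy.
- apply: (HIcase); first by have [-> ->] := ffx; rewrite esym.
  by move=> i Hi; have [-> ->] := ffU i Hi; have [] := Hsg i Hi.
- rewrite -/R; apply: (X_TD (h := s)); last first.
    by move=> z a Hz Hza; apply: F1; apply: leaf_nbr_ht Hz Hza.
  move=> r /inR[[Hry Hrw]|[i Hi [Hrf Hrv]]|[Hrs Hr2]].
  + exists [:: wy; y; s]; split => //; first by pathtac.
    by apply: forall_in.
  + move: i Hi Hrf Hrv; apply: (HIcase).
      have [-> ->] := ffx => Hrf Hrv.
      exists [:: wx; x; s]; split => //; first by pathtac.
      by apply: forall_in.
    move=> i Hi; have [-> ->] := ffU i Hi => Hrf Hrv.
    have [Hsi _] := Hsg i Hi; have [Hqi _ _] := Hyq i Hi; have [Hiy _ _] := HU i Hi.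
    exists [:: sg i; yq i; i; y; s]; split => //; first by pathtac.
    apply: forall_in => /=; split; first by exists (yq i) => //; apply: F6.
    split; first by exists (sg i); [apply: F1; have [] := Hsg i Hi | rewrite esym].
    split; first by exists y.
    done.
  + exists [:: sq; y'; wy; y; s]; split => //; first by pathtac.
    apply: forall_in => /=; split; first by exists lq.
    split; first by exists sq => //; apply: F1.
    done.
- by move=> i; rewrite in_setU1 => /orP[/eqP ->|Hi]; [have [-> _] := ffx | have [-> _] := ffU i Hi; apply: F6].
Qed.


Lemma descend k v : ht v = k + 4 -> exists t, ht t = 4.
Proof.
elim: k v => [|k IH] v Hv; first by exists v.
have [u [_ Hu]] := height_down (k := k + 4) Hv.
exact: IH Hu.
Qed.

Lemma fwd : [/\ tree_height_le e 3,
       (forall v, v \in Vh e 2 -> #|N v :&: Vh e 1| = 1) &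
       (forall v, v \in Vh e 1 -> #|N v :&: Vh e 2| <= 1)].
Proof.
have H2 : forall v, ht v = 2 -> #|N v :&: Vh e 1| = 1.
  move=> v Hv; apply/eqP; rewrite eqn_leq; apply/andP; split.
    rewrite leqNgt; apply/negP => /card_gt1P[s1 [s2 [Hs1 Hs2 Hne]]].
    move: Hs1 Hs2; rewrite !inE => /andP[Hs1 /eqP Hh1] /andP[Hs2 /eqP Hh2].
    by apply: (caseB (x := v) (s1 := s1) (s2 := s2)); rewrite // esym.
  apply/card_gt0P; have [s [Hvs Hs]] := height_down (k := 1) Hv.
  by exists s; rewrite !inE esym Hvs Hs eqxx.
have H1 : forall v, ht v <= 3.
  move=> v; rewrite leqNgt; apply/negP => Hv.
  have [t Ht] := descend (k := ht v - 4) (v := v) (ltac:(lia)).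
  exact: caseA Ht.
split => //.
- by move=> v; rewrite inE => /eqP /H2.
- move=> s; rewrite inE => /eqP Hs; rewrite leqNgt; apply/negP => /card_gt1P[x [y [Hx Hy Hne]]].
  move: Hx Hy; rewrite !inE => /andP[Hx /eqP Hx2] /andP[Hy /eqP Hy2].
  by apply: (caseC (s := s) (x := x) (y := y)); rewrite // esym.
Qed.

End Basics.

Section Bwd.
Variables (T : finType) (e : rel T).
Hypothesis esym : symmetric e.
Hypothesis eirr : irreflexive e.
Hypothesis bal : balanced e.

Local Notation N := (nbhd e).
Local Notation ht := (height e).

Lemma bwd_card (H1 : forall v, ht v <= 3)
  (H2 : forall v, v \in Vh e 2 -> #|N v :&: Vh e 1| = 1)
  (H3 : forall v, v \in Vh e 1 -> #|N v :&: Vh e 2| <= 1)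
  (D : {set T}) : minimal_TDset e D -> #|D| = 2 * #|Vh e 1|.
Proof.
move=> Hm; have HT := Hm.1; have HTP := iffLR (TDP e D) HT.
have V1sub : Vh e 1 \subset D.
  apply/subsetP => s; rewrite inE => /eqP Hs.
  have [l [Hsl Hl]] := ht1_leaf esym bal Hs.
  have [d Hd Hld] := HTP l.
  by have <- : d = s by apply: (leaf_nbr esym Hl) => //; rewrite esym.
have noV3 : forall d, d \in D -> ht d != 3.
  move=> d Hd; apply/negP => /eqP Hd3.
  have [u [Hud Hpriv]] := private Hm Hd.
  have Hu2 : ht u = 2 by have := adj_ht esym bal Hud; have := H1 u; rewrite Hd3; lia.
  have [s' [Hus Hs1]] := height_down esym bal (k := 1) Hu2.
  have Hs'D : s' \in D by apply: (subsetP V1sub); rewrite inE Hs1.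
  by have := Hpriv s' Hs'D Hus => Es; rewrite -Es Hs1 in Hd3.
pose g d := pick_in (N d :&: Vh e 1) d.
have Hg : forall d, d \in D -> d \notin Vh e 1 ->
    [/\ e d (g d), ht (g d) = 1 & forall s', e d s' -> ht s' = 1 -> s' = g d].
  move=> d Hd; rewrite inE => Hd1.
  have [u [Hud _]] := private Hm Hd.
  have Hd02 : ht d = 0 \/ ht d = 2.
    have := adj_ht esym bal Hud; have := H1 d; have := noV3 d Hd; move: Hd1; lia.
  have Hex : exists s, [/\ e d s, ht s = 1 & forall s', e d s' -> ht s' = 1 -> s' = s].
    case: Hd02 => Hd0.
      have Hl : leaf e d by apply: height0_leaf => //; exact: nbhd_nonempty Hud.
      exists u; split; first by rewrite esym.
        by apply: (leaf_nbr_ht esym bal Hl); rewrite esym.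
      by move=> s' Hs' _; apply: (leaf_nbr esym Hl) => //; rewrite esym.
    have /eqP/cards1P[c Hc] := H2 d (ltac:(by rewrite inE Hd0)).
    have : c \in N d :&: Vh e 1 by rewrite Hc set11.
    rewrite !inE => /andP[Hcd /eqP Hc1]; exists c; split => //; first by rewrite esym.
    move=> s' Hs' Hs1; have : s' \in N d :&: Vh e 1 by rewrite !inE esym Hs' Hs1 eqxx.
    by rewrite Hc inE => /eqP.
  have [s [Hds Hs1 Hsu]] := Hex.
  have Hgd : g d \in N d :&: Vh e 1.
    by apply: pick_inP; exists s; rewrite !inE esym Hds Hs1 eqxx.
  move: Hgd; rewrite !inE => /andP[Hgd /eqP Hg1].
  have Egs : g d = s by apply: Hsu => //; rewrite esym.
  by rewrite Egs; split.
have Hinj : {in D :\: Vh e 1 &, injective g}.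
  move=> d1 d2; rewrite !inE => /andP[Hd1n Hd1] /andP[Hd2n Hd2] Eg.
  have [Hg1 Hg1h _] := Hg d1 Hd1 (ltac:(by rewrite inE)).
  have [Hg2 Hg2h _] := Hg d2 Hd2 (ltac:(by rewrite inE)).
  case: (eqVneq d1 d2) => // Hne; exfalso.
  have leafcase : forall a b, a \in D -> b \in D -> a != b -> ht a = 0 -> e a (g a) -> e b (g a) -> False.
    move=> a b Ha Hb Hab Ha0 Hag Hbg.
    have [u [Hua Hpriv]] := private Hm Ha.
    have Hla : leaf e a by apply: height0_leaf => //; exact: nbhd_nonempty Hua.
    have Eu : u = g a by apply: (leaf_nbr esym Hla) => //; rewrite esym.
    have := Hpriv b Hb; rewrite Eu esym Hbg => /(_ isT) Eba.
    by move: Hab; rewrite Eba eqxx.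
  have [u1 [Hu1 _]] := private Hm Hd1; have [u2 [Hu2 _]] := private Hm Hd2.
  have Hh1 : ht d1 = 0 \/ ht d1 = 2.
    have := adj_ht esym bal Hu1; have := H1 d1; have := noV3 d1 Hd1; move: Hd1n; lia.
  have Hh2 : ht d2 = 0 \/ ht d2 = 2.
    have := adj_ht esym bal Hu2; have := H1 d2; have := noV3 d2 Hd2; move: Hd2n; lia.
  case: Hh1 => Hh1; first by apply: (leafcase d1 d2) => //; rewrite Eg.
  case: Hh2 => Hh2; first by apply: (leafcase d2 d1) => //; [rewrite eq_sym | rewrite -Eg].
  have := H3 (g d1); rewrite inE Hg1h eqxx => /(_ isT).
  rewrite leqNgt => /negP; apply; apply/card_gt1P; exists d1, d2.
  by rewrite !inE Hh1 Hh2 Hne Hg1 Eg Hg2.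
have Himg : g @: (D :\: Vh e 1) = Vh e 1.
  apply/setP => s; apply/imsetP/idP => [[d Hd ->]|Hs].
    by move: Hd; rewrite !inE => /andP[Hd1 Hd]; have [_ -> _] := Hg d Hd (ltac:(by rewrite inE)).
  move: (Hs); rewrite inE => /eqP Hs1.
  have [d Hd Hsd] := HTP s.
  have Hd1 : d \notin Vh e 1.
    by rewrite inE; apply/negP => /eqP Hd1; apply: (adj_ht_ne bal Hsd Hs1 Hd1).
  exists d; first by rewrite inE Hd1 Hd.
  by have [_ _ Hu] := Hg d Hd Hd1; apply: Hu => //; rewrite esym.
have Hc : #|D :\: Vh e 1| = #|Vh e 1| by rewrite -{2}Himg card_in_imset.
have HI : D :&: Vh e 1 = Vh e 1 by apply/setIidPr.
by rewrite -(cardsID (Vh e 1) D) HI Hc mul2n addnn.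
Qed.

End Bwd.

Unset Implicit Arguments.

Theorem theorem3p37 (T : finType) (e : rel T) :
  is_tree e -> balanced e ->
  (unmixed e <->
   [/\ tree_height_le e 3,
       (forall v, v \in Vh e 2 -> #|nbhd e v :&: Vh e 1| = 1) &
       (forall v, v \in Vh e 1 -> #|nbhd e v :&: Vh e 2| <= 1)]).
Proof.
move=> Htree Hbal; have [[Hsym Hirr] _ _ Hnc] := Htree.
split => [Hunm|[H1 H2 H3] D1 D2 Hm1 Hm2]; last first.
  by rewrite (bwd_card Hsym Hbal H1 H2 H3 Hm1) (bwd_card Hsym Hbal H1 H2 H3 Hm2).
case: (boolP [exists u, exists v, e u v]) => [/existsP[u /existsP[v Huv]]|Hno].
  have Hiso := nonisol Htree (ex_intro _ u (ex_intro _ v Huv)).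
  exact: (fwd Hsym Hirr Hbal Hnc Hiso Hunm).
have H0 : forall v, height e v = 0.
  move=> v; rewrite /height; case: ifP => // /negbT Hn; exfalso.
  have [u Hu] : exists u, u \in nbhd e v by apply/card_gt0P; rewrite lt0n.
  rewrite inE in Hu.
  by move/existsPn: Hno => /(_ u) /existsPn /(_ v); rewrite Hu.
by split => [v|v|v]; rewrite ?inE H0.
Qed.
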